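(* Assume $P_{XY}\in\mathcal{H}_{XY}$. Let $\Omega_u=\{\omega_1<\dots<\omega_{|\mathcal{X}|}\}\subset\{1,\dots,|\mathcal{Y}|\}$ with $M_{\Omega_u}$ invertible, and let $J_u\in\mathbb{R}^{|\mathcal{X}|}$ with $\sum_xJ_u(x)=0$ and $\sum_x|J_u(x)|\le1$. For $\epsilon>0$ let $V^*_{\Omega_u}\in\mathbb{R}^{|\mathcal{Y}|}$ be defined by $V^*_{\Omega_u}(\omega_i)=\left(M_{\Omega_u}^{-1}MP_Y+\epsilon M_{\Omega_u}^{-1}M\begin{bmatrix}P_{X|Y_1}^{-1}J_u\\0\end{bmatrix}\right)(i)$ for $1\le i\le|\mathcal{X}|$ and $V^*_{\Omega_u}(j)=0$ for $j\notin\Omega_u$, and suppose $V^*_{\Omega_u}$ is an extreme point of $\mathbb{S}_u$ for all sufficiently small $\epsilon>0$. Then, for $P_{Y|U=u}=V^*_{\Omega_u}$, as $\epsilon\to0^+$, $$H(P_{Y|U=u})=-\sum_{y=1}^{|\mathcal{Y}|}P_{Y|U=u}(y)\log P_{Y|U=u}(y)=-(b_u+\epsilon a_uJ_u)+o(\epsilon),$$ where $l_u=\left[\log\left((M_{\Omega_u}^{-1}MP_Y)(i)\right)\right]_{i=1,\dots,|\mathcal{X}|}\in\mathbb{R}^{1\times|\mathcal{X}|}$, $b_u=l_u\left(M_{\Omega_u}^{-1}MP_Y\right)$, and $a_u=l_u\left(M_{\Omega_u}^{-1}M(1\!:\!|\mathcal{X}|)P_{X|Y_1}^{-1}\right)\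in\mathbb{R}^{1\times|\mathcal{X}|}$.
   Context: Setting: $X,Y$ on finite alphabets with $|\mathcal{X}|<|\mathcal{Y}|$, joint pmf $P_{XY}$, marginal vectors $P_X,P_Y$ with positive entries. $P_{X|Y}\in\mathbb{R}^{|\mathcal{X}|\times|\mathcal{Y}|}$ has full row rank and $P_{X|Y}=[P_{X|Y_1},P_{X|Y_2}]$ with $P_{X|Y_1}$ (first $|\mathcal{X}|$ columns) invertible. With an SVD $P_{X|Y}=U\Sigma V^T$, $V=[v_1,\dots,v_{|\mathcal{Y}|}]$, set $M=[v_1,\dots,v_{|\mathcal{X}|}]^T$; $M_\Omega$ is the submatrix of $M$ with columns indexed by $\Omega$ and $M(1\!:\!|\mathcal{X}|)$ the submatrix of its first $|\mathcal{X}|$ columns. The zero block has size $|\mathcal{Y}|-|\mathcal{X}|$. $\mathbb{S}_u=\{y\in\mathbb{R}^{|\mathcal{Y}|}: My=MP_Y+\epsilon M\begin{bmatrix}P_{X|Y_1}^{-1}J_u\\0\end{bmatrix},\ y\ge0\}$. $\mathcal{H}_{XY}$ is the set of joint distributions $P_{XY}$ such that for every $\Omega\subset\{1,\dots,|\mathcal{Y}|\}$ with $|\Omega|=|\mathcal{X}|$ and $M_\Omega$ invertible, if $t_\Omega=M_\Omega^{-1}MP_Y$ lies in the probability simplex $\{x\in\mathbb{R}^{|\mathcal{X}|}_{\ge0}:\mathbf{1}^Tx=1\}$ then all entries of $t_\Omega$ are strictly positive. Convention $0\log0=0$. *)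

(* Defs.v *)
From HB Require Import structures.
From mathcomp Require Import all_boot all_order all_algebra.
From mathcomp Require Import reals exp.
Set Implicit Arguments. Unset Strict Implicit. Unset Printing Implicit Defensive.
Import Order.TTheory GRing.Theory Num.Theory.
Local Open Scope ring_scope.

Section Defs.
Variable R : realType.

Definition xlogx (x : R) : R := if x == 0 then 0 else x * ln x.

Definition entropy m (p : 'cV[R]_m) : R := - \sum_(j < m) xlogx (p j 0).

Definition marginalY n m (PXY : 'M[R]_(n, m)) : 'cV[R]_m :=
  \col_j \sum_(i < n) PXY i j.
Definition marginalX n m (PXY : 'M[R]_(n, m)) : 'cV[R]_n :=
  \col_i \sum_(j < m) PXY i j.
Definition condXY n m (PXY : 'M[R]_(n, m)) : 'M[R]_(n, m) :=
  \matrix_(i, j) (PXY i j / marginalY PXY j 0).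

Definition is_joint_pmf n m (PXY : 'M[R]_(n, m)) : Prop :=
  (forall i j, 0 <= PXY i j) /\ \sum_(i < n) \sum_(j < m) PXY i j = 1.

Definition is_svd n m (A : 'M[R]_(n, m)) (U : 'M[R]_n) (S : 'M[R]_(n, m))
  (V : 'M[R]_m) : Prop :=
  U^T *m U = 1%:M /\ V^T *m V = 1%:M /\
  (forall (i : 'I_n) (j : 'I_m), (i : nat) <> (j : nat) -> S i j = 0) /\
  (forall (i : 'I_n) (j : 'I_m), (i : nat) = (j : nat) -> 0 <= S i j) /\
  A = U *m S *m V^T.

(* M = [v_1, ..., v_n]^T : the first n columns of V, transposed. *)
Definition Mmat n k (V : 'M[R]_(n + k)) : 'M[R]_(n, n + k) :=
  \matrix_(i < n, j < n + k) V j (lshift k i).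

(* An index set Omega = {w_1 < ... < w_n} given by a strictly increasing map. *)
Definition strictly_incr n m (w : 'I_n -> 'I_m) : Prop :=
  forall i j : 'I_n, (i < j)%N -> (w i < w j)%N.

Definition Msub n m (M : 'M[R]_(n, m)) (w : 'I_n -> 'I_m) : 'M[R]_n :=
  colsub w M.

Definition in_simplex n (t : 'cV[R]_n) : Prop :=
  (forall i, 0 <= t i 0) /\ \sum_(i < n) t i 0 = 1.

Definition in_HXY n m (M : 'M[R]_(n, m)) (PY : 'cV[R]_m) : Prop :=
  forall w : 'I_n -> 'I_m, strictly_incr w -> Msub M w \in unitmx ->
    in_simplex (invmx (Msub M w) *m M *m PY) ->
    forall i, 0 < (invmx (Msub M w) *m M *m PY) i 0.

Definition S_u n k (M : 'M[R]_(n, n + k)) (PY : 'cV[R]_(n + k))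
  (P1 : 'M[R]_n) (J : 'cV[R]_n) (eps : R) (y : 'cV[R]_(n + k)) : Prop :=
  M *m y = M *m PY + eps *: (M *m col_mx (invmx P1 *m J) (0 : 'cV[R]_k)) /\
  forall j, 0 <= y j 0.

Definition extreme_point m (S : 'cV[R]_m -> Prop) (x : 'cV[R]_m) : Prop :=
  S x /\ forall y z, S y -> S z -> forall lam : R, 0 < lam < 1 ->
    x = lam *: y + (1 - lam) *: z -> y = z.

(* The vector supported on Omega with prescribed values on Omega:
   v(w_i) = c(i), v(j) = 0 for j not in Omega. *)
Definition spread n m (w : 'I_n -> 'I_m) (c : 'cV[R]_n) : 'cV[R]_m :=
  \col_j \sum_(i < n | w i == j) c i 0.

Definition Vstar n k (M : 'M[R]_(n, n + k)) (PY : 'cV[R]_(n + k))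
  (P1 : 'M[R]_n) (J : 'cV[R]_n) (w : 'I_n -> 'I_(n + k)) (eps : R)
  : 'cV[R]_(n + k) :=
  spread w (invmx (Msub M w) *m M *m PY
            + eps *: (invmx (Msub M w) *m M *m col_mx (invmx P1 *m J) (0 : 'cV[R]_k))).

Definition l_u n m (M : 'M[R]_(n, m)) (PY : 'cV[R]_m) (w : 'I_n -> 'I_m)
  : 'rV[R]_n := \row_i ln ((invmx (Msub M w) *m M *m PY) i 0).
Definition b_u n m (M : 'M[R]_(n, m)) (PY : 'cV[R]_m) (w : 'I_n -> 'I_m) : R :=
  (l_u M PY w *m (invmx (Msub M w) *m M *m PY)) 0 0.
Definition a_u n k (M : 'M[R]_(n, n + k)) (PY : 'cV[R]_(n + k)) (P1 : 'M[R]_n)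
  (w : 'I_n -> 'I_(n + k)) : 'rV[R]_n :=
  l_u M PY w *m (invmx (Msub M w) *m lsubmx M *m invmx P1).

End Defs.

(* Main.v *)
Require Import Defs.
From HB Require Import structures.
From mathcomp Require Import all_boot all_order all_algebra.
From mathcomp Require Import reals exp.
From mathcomp Require Import ring lra.
Import Order.TTheory GRing.Theory Num.Theory.
Local Open Scope ring_scope.
Set Implicit Arguments. Unset Strict Implicit.

Section H.
Variable R : realType.
Lemma mul_spread p n m (M : 'M[R]_(p, m)) (w : 'I_n -> 'I_m) (c : 'cV[R]_n) :
  M *m spread w c = colsub w M *m c.
Proof.
apply/matrixP => i j; rewrite (ord1 j) !mxE.
under eq_bigr => l _ do rewrite mxE mulr_sumr.
rewrite (exchange_big_dep xpredT) //=; apply: eq_bigr => l _.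
by rewrite (big_pred1 (w l)) ?mxE // => x; rewrite eq_sym.
Qed.

Lemma sum_spread n m (w : 'I_n -> 'I_m) (c : 'cV[R]_n) :
  \sum_j spread w c j 0 = \sum_i c i 0.
Proof.
under eq_bigr => l _ do rewrite mxE.
rewrite (exchange_big_dep xpredT) //=; apply: eq_bigr => l _.
by rewrite (big_pred1 (w l)) // => x; rewrite eq_sym.
Qed.

Lemma spread_inj n m (w : 'I_n -> 'I_m) (c : 'cV[R]_n) i :
  injective w -> spread w c (w i) 0 = c i 0.
Proof.
move=> wi; rewrite mxE (big_pred1 i) // => x; rewrite /= inj_eq //.
Qed.

Lemma xlogx0 : xlogx (0 : R) = 0.
Proof. by rewrite /xlogx eqxx. Qed.

Lemma entropy_spread n m (w : 'I_n -> 'I_m) (c : 'cV[R]_n) :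
  injective w -> entropy (spread w c) = - \sum_i xlogx (c i 0).
Proof.
move=> wi; rewrite /entropy; congr (- _).
transitivity (\sum_j \sum_(i | w i == j) xlogx (c i 0)).
  apply: eq_bigr => j _.
  case: (pickP (fun i => w i == j)) => [i0 /eqP hi0|hn].
    rewrite -hi0 spread_inj // (big_pred1 i0) // => x; rewrite /= inj_eq //.
  rewrite mxE !big_pred0 ?xlogx0 //.
rewrite (exchange_big_dep xpredT) //=; apply: eq_bigr => l _.
by rewrite (big_pred1 (w l)) // => x; rewrite eq_sym.
Qed.

Lemma svd_struct n k (A : 'M[R]_(n, n + k)) U S V :
  is_svd A U S V ->
  A = U *m diag_mx (\row_i S i (lshift k i)) *m Mmat V.
Proof.
case=> _ [_ [hd [_ ->]]]; rewrite -!mulmxA; congr (_ *m _).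
apply/matrixP => i j; rewrite !mxE.
rewrite (bigD1 (lshift k i)) //= big1 ?addr0.
  rewrite (bigD1 i) //= big1 ?addr0; first by rewrite !mxE eqxx mulr1n.
  by move=> l /negbTE hl; rewrite !mxE eq_sym hl mulr0n mul0r.
move=> l hl; rewrite hd ?mul0r //= => e; move: hl; apply/negP/negPn/eqP.
by apply: val_inj.
Qed.

Lemma ln_le_sub1 (z : R) : 0 < z -> ln z <= z - 1.
Proof.
move=> z0; have := @le_ln1Dx R (z - 1).
have -> : 1 + (z - 1) = z by ring.
by apply; lra.
Qed.

Lemma key_ineq (x y : R) : 0 < x -> 0 < y ->
  0 <= y * ln y - x * ln x - (y - x) * (ln x + 1) <= (y - x) ^+ 2 / x.
Proof.
move=> x0 y0.
have h1 : ln y - ln x <= y / x - 1.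
  rewrite -ln_div ?posrE //; apply: ln_le_sub1; exact: divr_gt0.
have h2 : ln x - ln y <= x / y - 1.
  rewrite -ln_div ?posrE //; apply: ln_le_sub1; exact: divr_gt0.
have h1' : y * (ln y - ln x) <= y * (y / x - 1) by rewrite ler_pM2l.
have h2' : y * (ln x - ln y) <= y * (x / y - 1) by rewrite ler_pM2l.
have e1 : y * (x / y - 1) = x - y by field; lra.
have e2 : y * (y / x - 1) - (y - x) = (y - x) ^+ 2 / x by field; lra.
apply/andP; split; lra.
Qed.

Lemma sumE p (z : 'cV[R]_p) : \sum_i z i 0 = ((const_mx 1 : 'rV[R]_p) *m z) 0 0.
Proof. by rewrite mxE; apply: eq_bigr => i _; rewrite mxE mul1r. Qed.

End H.
Unset Implicit Arguments.

Theorem lemma4 (R : realType) (n k : nat) (hk : (0 < k)%N)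
  (PXY : 'M[R]_(n, n + k))
  (U : 'M[R]_n) (Sig : 'M[R]_(n, n + k)) (V : 'M[R]_(n + k))
  (w : 'I_n -> 'I_(n + k)) (J : 'cV[R]_n) :
  is_joint_pmf PXY ->
  (forall i, 0 < marginalX PXY i 0) ->
  (forall j, 0 < marginalY PXY j 0) ->
  \rank (condXY PXY) = n ->
  lsubmx (condXY PXY) \in unitmx ->
  is_svd (condXY PXY) U Sig V ->
  in_HXY (Mmat V) (marginalY PXY) ->
  strictly_incr w ->
  Msub (Mmat V) w \in unitmx ->
  \sum_(i < n) J i 0 = 0 ->
  \sum_(i < n) `|J i 0| <= 1 ->
  (exists2 e0 : R, 0 < e0 & forall eps : R, 0 < eps < e0 ->
     extreme_point
       (S_u (Mmat V) (marginalY PXY) (lsubmx (condXY PXY)) J eps)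
       (Vstar (Mmat V) (marginalY PXY) (lsubmx (condXY PXY)) J w eps)) ->
  forall eta : R, 0 < eta -> exists2 delta : R, 0 < delta &
    forall eps : R, 0 < eps < delta ->
      `| entropy (Vstar (Mmat V) (marginalY PXY) (lsubmx (condXY PXY)) J w eps)
         - - (b_u (Mmat V) (marginalY PXY) w
              + eps * (a_u (Mmat V) (marginalY PXY) (lsubmx (condXY PXY)) w *m J) 0 0) |
      <= eta * eps.
Proof.
move=> [PXY0 PXYsum] hX hY hrank hP1 hsvd hH hw hMw hJ0 hJ1 [e0 e0pos hext] eta etapos.
have winj : injective w.
  move=> i j e; apply: val_inj; case: (ltngtP i j) => // h; by have := hw _ _ h; rewrite e ltnn.
have colsum : forall j0, \sum_i condXY PXY i j0 = 1.
  move=> j0; under eq_bigr => i _ do rewrite mxE.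
  rewrite -mulr_suml.
  have e : marginalY PXY j0 0 = \sum_i PXY i j0 by rewrite mxE.
  by rewrite -e divff // lt0r_neq0.
set M := Mmat V. set PY := marginalY PXY. set P1 := lsubmx (condXY PXY).
set Mw := Msub M w.
have [c hc] : exists c : 'rV[R]_n, c *m M = const_mx 1.
  exists (const_mx 1 *m U *m diag_mx (\row_i Sig i (lshift k i))).
  rewrite -!mulmxA (mulmxA U) -(svd_struct hsvd).
  apply/matrixP => i j; rewrite [RHS]mxE -[RHS](colsum j) mxE.
  by apply: eq_bigr => l _; rewrite [const_mx _ _ _]mxE mul1r.
have sum1 : forall y : 'cV[R]_(n + k), \sum_j y j 0 = (c *m M *m y) 0 0.
  by move=> y; rewrite hc sumE.
have sumz : forall (z : 'cV[R]_n) y, Mw *m z = M *m y ->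
    \sum_i z i 0 = \sum_j y j 0.
  move=> z y hz; rewrite -(sum_spread w) sum1 -mulmxA mul_spread.
  by rewrite [colsub w M]/(Msub M w) -/Mw hz mulmxA -sum1.
set t := invmx Mw *m M *m PY.
have ht : Mw *m t = M *m PY by rewrite /t !mulmxA mulmxV // mul1mx.
have sumPY : \sum_j PY j 0 = 1.
  under eq_bigr => j _ do rewrite mxE.
  by rewrite exchange_big.
have sumt : \sum_i t i 0 = 1 by rewrite (sumz _ _ ht).
set x0 := col_mx (invmx P1 *m J) (0 : 'cV[R]_k).
set s := invmx Mw *m M *m x0.
have hs : Mw *m s = M *m x0 by rewrite /s !mulmxA mulmxV // mul1mx.
have sums : \sum_i s i 0 = 0.
  rewrite (sumz _ _ hs) big_split_ord /=.
  under eq_bigr => i _ do rewrite col_mxEu.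
  under [X in _ + X]eq_bigr => i _ do rewrite col_mxEd mxE.
  rewrite big1_eq addr0 sumE.
  have h1 : const_mx 1 *m P1 = const_mx (1 : R) :> 'rV_n.
    apply/matrixP => i j; rewrite [RHS]mxE -[RHS](colsum (lshift k j)) mxE.
    by apply: eq_bigr => l _; rewrite [const_mx _ _ _]mxE mul1r mxE.
  have h2 : const_mx 1 *m invmx P1 = const_mx (1 : R) :> 'rV_n.
    by rewrite -{1}h1 mulmxK.
  by rewrite mulmxA h2 -sumE.
have hV : forall eps, Vstar M PY P1 J w eps = spread w (t + eps *: s) by [].
have tge0 : forall i, 0 <= t i 0.
  move=> i; rewrite leNgt; apply/negP => tneg.
  have hnn : forall eps, 0 < eps < e0 -> 0 <= t i 0 + eps * s i 0.
    move=> eps he; have [[_ h] _] := hext eps he.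
    by have := h (w i); rewrite hV spread_inj // !mxE.
  set a := `|s i 0|.
  have a0 : 0 <= a by rewrite /a normr_ge0.
  set e := Num.min (e0 / 2) (- t i 0 / (2 * (a + 1))).
  have epos : 0 < e by rewrite lt_min; apply/andP; split;
    [apply: divr_gt0 | apply: divr_gt0; lra].
  have ee0 : e < e0 by rewrite gt_min; apply/orP; left; lra.
  have ea : e <= - t i 0 / (2 * (a + 1)) by rewrite ge_min lexx orbT.
  have ea' : e * (2 * (a + 1)) <= - t i 0.
    by rewrite -ler_pdivlMr //; lra.
  have sa : e * s i 0 <= e * a by rewrite ler_pM2l // /a ler_norm.
  have := hnn e; rewrite epos ee0 => /(_ isT); nra.
have tpos : forall i, 0 < t i 0.
  apply: (hH w hw hMw); split => //.
have aJ : (a_u M PY P1 w *m J) 0 0 = \sum_i ln (t i 0) * s i 0.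
  have sE : s = invmx Mw *m lsubmx M *m invmx P1 *m J.
    by rewrite /s /x0 -[in RHS]mulmxA -(mulmxA (invmx Mw)) -{1}[M](hsubmxK M) mul_row_col mulmx0 addr0 !mulmxA.
  have -> : a_u M PY P1 w *m J = l_u M PY w *m s by rewrite sE /a_u !mulmxA.
  by rewrite mxE; apply: eq_bigr => i _; rewrite [l_u _ _ _ _ _]mxE.
have bE : b_u M PY w = \sum_i ln (t i 0) * t i 0.
  by rewrite /b_u mxE; apply: eq_bigr => i _; rewrite [l_u _ _ _ _ _]mxE.
set K := \sum_i `|s i 0| / t i 0 + 1.
set C := \sum_i (s i 0) ^+ 2 / t i 0.
have hK : forall i, `|s i 0| / t i 0 <= K - 1.
  move=> i; rewrite /K addrK (bigD1 i) //= lerDl; apply: sumr_ge0 => j _.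
  by apply: divr_ge0 => //; apply: ltW.
have K1 : 1 <= K.
  rewrite /K lerDr; apply: sumr_ge0 => j _; by apply: divr_ge0 => //; apply: ltW.
have C0 : 0 <= C.
  apply: sumr_ge0 => j _; apply: divr_ge0; [exact: sqr_ge0 | exact: ltW].
have K0 : 0 < K by lra.
have C10 : 0 < C + 1 by lra.
exists (Num.min (K^-1) (eta / (C + 1))).
  by rewrite lt_min invr_gt0 K0 divr_gt0.
move=> eps /andP[ep]; rewrite lt_min => /andP[e1 e2].
rewrite -div1r ltr_pdivlMr // in e1.
rewrite ltr_pdivlMr // in e2.
have ypos : forall i, 0 < t i 0 + eps * s i 0.
  move=> i; have h := hK i; have ti := tpos i.
  set q := `|s i 0| / t i 0 in h.
  have sq : `|s i 0| = q * t i 0 by rewrite /q divfK // lt0r_neq0.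
  have eq1 : eps * q < 1 by nra.
  have ns : - `|s i 0| <= s i 0.
    by have := ler_norm (- s i 0); rewrite normrN; lra.
  have : eps * (- `|s i 0|) <= eps * s i 0 by rewrite ler_pM2l.
  rewrite sq; nra.
rewrite hV entropy_spread //.
under eq_bigr => i _ do rewrite [(t + _) _ _]mxE [(_ *: s) _ _]mxE /xlogx (gt_eqF (ypos i)).
set g := fun i => (t i 0 + eps * s i 0) * ln (t i 0 + eps * s i 0)
   - t i 0 * ln (t i 0) - (t i 0 + eps * s i 0 - t i 0) * (ln (t i 0) + 1).
have E : \sum_i (t i 0 + eps * s i 0) * ln (t i 0 + eps * s i 0) =
  \sum_i g i + \sum_i ln (t i 0) * t i 0 + eps * \sum_i ln (t i 0) * s i 0
  + eps * \sum_i s i 0.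
  rewrite !mulr_sumr -!big_split /=; apply: eq_bigr => i _; rewrite /g; ring.
rewrite E bE aJ sums mulr0 addr0.
have G0 : 0 <= \sum_i g i.
  apply: sumr_ge0 => i _; have /andP[] := key_ineq (tpos i) (ypos i); done.
have G1 : \sum_i g i <= eps ^+ 2 * C.
  rewrite /C mulr_sumr; apply: ler_sum => i _.
  have /andP[_ h] := key_ineq (tpos i) (ypos i).
  apply: (le_trans h); rewrite le_eqVlt; apply/orP; left; apply/eqP; ring.
set G := \sum_i g i.
set B := \sum_i ln (t i 0) * t i 0.
set A := \sum_i ln (t i 0) * s i 0.
rewrite (_ : - (G + B + eps * A) - - (B + eps * A) = - G); last by ring.
rewrite normrN ger0_norm //.
apply: (le_trans G1); nra.
Qed.
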